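(* Let $M$ be a finite abelian group of order $m \ge 2$, and let $J \colon M \times M \to \mathbf{C}$ be a Jacobi function on $M$. Then there is a unique field structure on the set $F = \hat{M} \sqcup \{0\}$, in which $0$ is the additive identity and the multiplication extends the group law of $\hat{M}$, such that for all $\alpha, \beta \in M$, \[ J(\alpha, \beta) = \frac{1}{m} \sum_{\substack{x+y=1,\\ x,y \in F \setminus \{0\}}} \alpha(x)\, \beta(y), \] where $+$ and $1$ denote the addition and multiplicative identity of this field.
   Context: $M$ is a finite abelian group written multiplicatively with identity $1$. For $\alpha \in M$, $\delta(\alpha)=1$ if $\alpha = 1$ and $\delta(\alpha)=0$ otherwise. $\hat{M}$ denotes the Pontryagin dual of $M$ (group of homomorphisms $M \to \mathbf{C}^*$), written multiplicatively; for $\alpha \in M$ and $x \in \hat{M}$, $\alpha(x)$ denotes the value of the character $x$ at $\alpha$. A Jacobi function on $M$ is a function $J \colon M \times M \to \mathbf{C}$ satisfying: (A) $J(\alpha,\beta)=J(\beta,\alpha)$ for all $\alpha,\beta \in M$; (B) setting $J^*(\alpha,\beta) = -\delta(\alpha)-\delta(\beta)+J(\alpha,\beta)$, one has $J^*(\alpha,\beta)J^*(\alpha\beta,\gamma)=J^*(\alpha,\beta\gamma)J^*(\beta,\gamma)$ for all $\alpha,\beta,\gamma \in M$; (C) for all $\alpha_1,\alpha_2,\alpha_3,\alpha_4 \in M$, $\sum_{\beta \in M} J(\alpha_1\beta,\alpha_2\beta^{-1})J(\alpha_3\beta,\alpha_4\beta^{-1}) = J(\alpha_1\alpha_4,\alpha_2\alpha_3)$.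 *)

(* Defs.v *)
From HB Require Import structures.
From mathcomp Require Import all_boot all_order all_algebra all_fingroup.
From mathcomp Require Import boolp classical_sets fsbigop.
Set Implicit Arguments. Unset Strict Implicit. Unset Printing Implicit Defensive.
Import Order.TTheory GRing.Theory Num.Theory.
Local Open Scope ring_scope.

Definition delta (M : finGroupType) (C : numClosedFieldType) (a : M) : C :=
  if a == 1%g then 1 else 0.

Definition is_Jacobi (M : finGroupType) (C : numClosedFieldType)
    (J : M -> M -> C) : Prop :=
  let Js := fun a b => - delta C a - delta C b + J a b in
  [/\ (forall a b, J a b = J b a),
      (forall a b c, Js a b * Js (a * b)%g c = Js a (b * c)%g * Js b c) &
      (forall a1 a2 a3 a4,
          \sum_(b : M) J (a1 * b)%g (a2 * b^-1)%g * J (a3 * b)%g (a4 * b^-1)%g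
          = J (a1 * a4)%g (a2 * a3)%g)].

Definition is_char (M : finGroupType) (C : numClosedFieldType)
    (f : {ffun M -> C}) : bool :=
  [forall a, forall b, f (a * b)%g == f a * f b] && [forall a, f a != 0].

Definition dual (M : finGroupType) (C : numClosedFieldType) :=
  {f : {ffun M -> C} | is_char f}.

(* value alpha(x) of the character x at alpha *)
Definition chv (M : finGroupType) (C : numClosedFieldType) (x : dual M C)
    (a : M) : C := val x a.

(* F = \hat M disjoint-union {0}, with None playing the role of 0. *)
Definition Fset (M : finGroupType) (C : numClosedFieldType) := option (dual M C).

Definition field_axioms (F : Type) (add mul : F -> F -> F) (z o : F) : Prop :=
  [/\ associative add, commutative add, left_id z add,
      (forall x, exists y, add x y = z) &
   [/\ associative mul, commutative mul, left_id o mul, o <> z &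
   [/\ left_distributive mul add &
       (forall x, x <> z -> exists y, mul x y = o)]]].

Definition extends_dual_law (M : finGroupType) (C : numClosedFieldType)
    (mul : Fset M C -> Fset M C -> Fset M C) : Prop :=
  forall x y : dual M C, exists z : dual M C,
    mul (Some x) (Some y) = Some z /\ forall a, chv z a = chv x a * chv y a.

Definition jacobi_sum (M : finGroupType) (C : numClosedFieldType)
    (add : Fset M C -> Fset M C -> Fset M C) (one : Fset M C) (a b : M) : C :=
  (#|M|%:R)^-1 *
  \sum_(p \in [set p : dual M C * dual M C | add (Some p.1) (Some p.2) = one])
      chv p.1 a * chv p.2 b.

(* Main.v *)
From HB Require Import structures.
Require Import Defs.
From mathcomp Require Import all_boot all_order all_algebra all_fingroup all_solvable.
From mathcomp Require Import zify ring.
From mathcomp Require boolp classical_sets fsbigop.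
Set Implicit Arguments. Unset Strict Implicit. Unset Printing Implicit Defensive.
Import Order.TTheory GRing.Theory Num.Theory.
Local Open Scope ring_scope.

Section Ext.
Variables (C : numClosedFieldType) (M : finGroupType).
Hypothesis Mab : abelian [set: M].

Lemma mulgC' (a b : M) : (a * b = b * a)%g.
Proof. by have /centsP := Mab; apply; rewrite inE. Qed.

Lemma commg' (a b : M) : commute a b.
Proof. exact: mulgC'. Qed.

Definition hom_on (H : {set M}) (f : M -> C) :=
  {in H &, forall a b, f (a * b)%g = f a * f b} /\ {in H, forall a, f a != 0}.

Lemma hom_on1 (H : {group M}) f : hom_on H f -> f 1%g = 1.
Proof.
case=> fM fn0; have := fM _ _ (group1 H) (group1 H); rewrite mulg1.
move/eqP; rewrite -{1}[f 1%g]mulr1 eq_sym => /eqP/mulfI -> //.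
exact: fn0.
Qed.

Lemma minexp (H : {group M}) (g : M) : exists k,
  [/\ (0 < k)%N, (g ^+ k \in H)%g & forall i, (0 < i < k)%N -> (g ^+ i \notin H)%g].
Proof.
have ex : exists i, (0 < i)%N && (g ^+ i \in H)%g.
  by exists #[g]%g; rewrite order_gt0 expg_order group1.
case: (ex_minnP ex) => k /andP[k0 gk] kmin; exists k; split=> // i /andP[i0 ik].
apply/negP=> gi; have := kmin i; rewrite i0 gi => /(_ isT).
by rewrite leqNgt ik.
Qed.


Lemma mulgACA' (a b c d : M) : (a * b * (c * d) = a * c * (b * d))%g.
Proof. by rewrite -!mulgA (mulgA b) (mulgC' b c) !mulgA. Qed.

Lemma ext_char (H : {group M}) f g t k :
  hom_on H f -> (0 < k)%N -> (g ^+ k \in H)%g ->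
  (forall i, (0 < i < k)%N -> (g ^+ i \notin H)%g) ->
  t ^+ k = f (g ^+ k)%g ->
  exists f', [/\ hom_on (H <*> <[g]>)%g f', {in H, f' =1 f} & g \notin H -> f' g = t].
Proof.
move=> fH k0 gkH kmin tk.
have KE : (H <*> <[g]> = H * <[g]>)%g.
  apply: comm_joingE; apply: centC; apply: (sub_abelian_cent2 Mab); by rewrite ?subsetT.
have uniqrep : forall y (i j : 'I_k), (y * g ^- i \in H)%g -> (y * g ^- j \in H)%g -> i = j.
  have wl : forall y (i j : 'I_k), (i <= j)%N -> (y * g ^- i \in H)%g -> (y * g ^- j \in H)%g -> i = j.
    move=> y i j ij yi yj.
    have e : (g ^+ (j - i) = (y * g ^- j)^-1 * (y * g ^- i))%g.
      by rewrite invMg invgK -mulgA mulKg expgnFr.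
    have : (g ^+ (j - i) \in H)%g by rewrite e groupM ?groupV.
    case: (posnP (j - i)) => [ji0 _ | jip].
      by apply: val_inj; apply/eqP; rewrite eqn_leq ij -subn_eq0 ji0.
    move=> gH; have := kmin (j - i)%N.
    by rewrite jip (leq_ltn_trans (leq_subr _ _) (ltn_ord j)) gH => /(_ isT).
  move=> y i j yi yj; case: (leqP i j) => ij; first exact: wl yi yj.
  by apply/esym/(wl y j i (ltnW ij)).
have existrep : forall y, (y \in H <*> <[g]>)%g -> exists i : 'I_k, (y * g ^- i \in H)%g.
  move=> y; rewrite KE => /mulsgP[h c hH /cycleP[j ->] ->].
  exists (Ordinal (ltn_pmod j k0)) => /=.
  rewrite {1}(divn_eq j k) expgD -mulgA mulgK groupM // mulnC expgM groupX //.
pose rep y := [pick i : 'I_k | (y * g ^- i \in H)%g].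
have repE : forall y (i : 'I_k), (y * g ^- i \in H)%g -> rep y = Some i.
  move=> y i yi; rewrite /rep; case: pickP => [j /= yj|/(_ i)]; last by rewrite yi.
  by rewrite (uniqrep y j i).
pose f' y := if rep y is Some i then f (y * g ^- i)%g * t ^+ i else 0.
have f'E : forall y (i : 'I_k), (y * g ^- i \in H)%g -> f' y = f (y * g ^- i)%g * t ^+ i.
  by move=> y i yi; rewrite /f' (repE y i yi).
have t0 : t != 0.
  by apply/eqP => t0; move: (fH.2 _ gkH); rewrite -tk t0 expr0n eqn0Ngt k0 /= eqxx.
have f1 := hom_on1 fH.
exists f'; split.
- split; last first.
    move=> y /existrep[i yi]; rewrite (f'E y i yi) mulf_neq0 ?expf_neq0 //.
    exact: fH.2.
  move=> y1 y2 /existrep[i1 y1i] /existrep[i2 y2i].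
  rewrite (f'E _ _ y1i) (f'E _ _ y2i).
  have gD : forall a b, (g ^- (a + b) = g ^- a * g ^- b)%g.
    by move=> a b; rewrite expgD invMg mulgC'.
  case: (ltnP (i1 + i2) k) => s12.
    have e : ((y1 * y2) * g ^- (Ordinal s12) = (y1 * g ^- i1) * (y2 * g ^- i2))%g.
      by rewrite /= gD mulgACA'.
    have hh : ((y1 * y2) * g ^- (Ordinal s12) \in H)%g by rewrite e groupM.
    rewrite (f'E _ _ hh) e fH.1 //= exprD.
    by rewrite mulrACA.
  have s12' : (i1 + i2 - k < k)%N.
    by have := ltn_ord i1; have := ltn_ord i2; move: s12; lia.
  have e : ((y1 * y2) * g ^- (Ordinal s12') = ((y1 * g ^- i1) * (y2 * g ^- i2)) * g ^+ k)%g.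
    have gE : (g ^+ (i1 + i2) = g ^+ (i1 + i2 - k) * g ^+ k)%g by rewrite -expgD subnK.
    have gE' : (g ^- (i1 + i2 - k) = g ^- (i1 + i2) * g ^+ k)%g.
      by rewrite gE invMg mulgC' mulKVg.
    by rewrite /= gE' gD mulgA mulgACA'.
  have hh : ((y1 * y2) * g ^- (Ordinal s12') \in H)%g by rewrite e (groupM (groupM y1i y2i) gkH).
  rewrite (f'E _ _ hh) e fH.1 ?(groupM y1i y2i) // fH.1 //= -tk.
  have tE : t ^+ i1 * t ^+ i2 = t ^+ k * t ^+ (i1 + i2 - k).
    by rewrite -!exprD subnKC.
  by rewrite [RHS]mulrACA tE !mulrA.
- move=> y yH; have y0 : (y * g ^- (Ordinal k0) \in H)%g by rewrite /= expg0 invg1 mulg1.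
  by rewrite (f'E _ _ y0) /= expg0 invg1 mulg1 expr0 mulr1.
- move=> gH; have k1 : (1 < k)%N.
    rewrite ltnNge; apply/negP => k1; have k1' : k = 1%N by lia.
    by move: gkH; rewrite k1' expg1 (negPf gH).
  have g1 : (g * g ^- (Ordinal k1) \in H)%g by rewrite /= expg1 mulgV group1.
  by rewrite (f'E _ _ g1) /= expg1 mulgV f1 mul1r expr1.
Qed.

Lemma ext_full n : forall (H : {group M}) f, (#|M| - #|H| <= n)%N -> hom_on H f ->
  exists f', hom_on [set: M] f' /\ {in H, f' =1 f}.
Proof.
elim: n => [|n IH] H f hn fH.
  have HT : H :=: [set: M].
    apply/eqP; rewrite eqEcard finset.subsetT cardsT /=; by move: hn; rewrite leqn0 subn_eq0.
  by exists f; rewrite -HT.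
case: (boolP ([set: M] \subset H)) => sTH.
  have HT : H :=: [set: M] by apply/eqP; rewrite eqEsubset finset.subsetT /=; exact: sTH.
  by exists f; rewrite -HT.
case/subsetPn: sTH => g _ gH.
have [k [k0 gkH kmin]] := minexp H g.
pose t := k.-root (f (g ^+ k)%g).
have tk : t ^+ k = f (g ^+ k)%g by rewrite rootCK.
have [f1 [f1H f1f _]] := ext_char fH k0 gkH kmin tk.
have pr : H \proper (H <*> <[g]>)%G.
  apply/properP; split; first exact: joing_subl.
  by exists g => //; apply: (subsetP (joing_subr _ _)); exact: cycle_id.
have := proper_card pr; have := max_card (mem (H <*> <[g]>)%G) => c1 c2.
have [f' [f'H f'f]] := IH (H <*> <[g]>)%G f1 ltac:(move: hn c1 c2; rewrite /=; lia) f1H.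
exists f'; split => // y yH; rewrite f'f ?f1f //.
exact: (subsetP (joing_subl _ _)).
Qed.

Definition chf (f : M -> C) : {ffun M -> C} := [ffun a => f a].

Lemma hom_is_char f : hom_on [set: M] f -> is_char (chf f).
Proof.
case=> fM fn; apply/andP; split; apply/forallP => a; first apply/forallP => b.
  by rewrite !ffunE fM ?inE.
by rewrite ffunE fn ?inE.
Qed.

Lemma charM (x : dual M C) a b : chv x (a * b)%g = chv x a * chv x b.
Proof. by case: x => f fc; case/andP: (fc) => H1 _; move/forallP: H1 => /(_ a)/forallP/(_ b)/eqP. Qed.

Lemma char_neq0 (x : dual M C) a : chv x a != 0.
Proof. by case: x => f fc; case/andP: (fc) => _ H1; move/forallP: H1 => /(_ a). Qed.

Lemma char1 (x : dual M C) : chv x 1%g = 1.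
Proof.
have := charM x 1%g 1%g; rewrite mulg1 => /eqP; rewrite -{1}[chv x 1%g]mulr1 eq_sym.
by move/eqP/mulfI => -> //; apply: char_neq0.
Qed.

Lemma charX (x : dual M C) a n : chv x (a ^+ n)%g = chv x a ^+ n.
Proof. by elim: n => [|n IH]; rewrite ?expg0 ?char1 // expgS charM IH exprS. Qed.

Lemma dual_eq (x y : dual M C) : (forall a, chv x a = chv y a) -> x = y.
Proof. by move=> h; apply: val_inj; apply/ffunP. Qed.

Lemma sep (c : M) : c != 1%g -> exists x : dual M C, chv x c != 1.
Proof.
move=> c1.
have [k [k0 gkH kmin]] := minexp 1%G c.
have k1 : (1 < k)%N.
  rewrite ltnNge; apply/negP => k1; have k1' : k = 1%N by lia.
  by move: gkH; rewrite k1' expg1 inE (negPf c1).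
pose r := k.-root (-1 : C).
pose t := r ^+ 2.
have f1 : hom_on 1%G (fun _ : M => 1 : C) by split=> // *; rewrite ?mulr1 ?oner_neq0.
have tk : t ^+ k = 1 by rewrite /t -exprM mulnC exprM rootCK ?(ltnW k1) // sqrrN expr1n.
have [f1' [f1H f1f f1g]] := ext_char f1 k0 gkH kmin tk.
have [f' [f'H f'f]] := ext_full (leqnn _) f1H.
exists (exist (@is_char M C) (chf f') (hom_is_char f'H)); rewrite /chv /= ffunE.
rewrite f'f; last by apply: (subsetP (joing_subr _ _)); exact: cycle_id.
rewrite f1g; last by rewrite inE.
rewrite /t sqrf_eq1; apply/negP => /orP[] /eqP r1.
  have := rootCK (ltnW k1) (-1 : C); rewrite -/r r1 expr1n => /eqP.
  by rewrite -subr_eq0 opprK -mulr2n mulrn_eq0 oner_eq0.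
by have := rootC_lt0 (-1 : C) k1; rewrite -/r r1 ltrN10.
Qed.

Lemma hom_chf (f : M -> C) : (forall a b, f (a * b)%g = f a * f b) -> (forall a, f a != 0) ->
  is_char (chf f).
Proof. by move=> h1 h2; apply: hom_is_char; split; [move=> a b _ _; apply: h1|move=> a _; apply: h2]. Qed.

Lemma d1_char : is_char (chf (fun _ : M => 1 : C)).
Proof. by apply: hom_chf => *; rewrite ?mulr1 ?oner_neq0. Qed.
Lemma dmul_char (x y : dual M C) : is_char (chf (fun a => chv x a * chv y a)).
Proof.
apply: hom_chf => [a b|a]; first by rewrite !charM mulrACA.
by rewrite mulf_neq0 ?char_neq0.
Qed.
Lemma dinv_char (x : dual M C) : is_char (chf (fun a => (chv x a)^-1)).
Proof.
apply: hom_chf => [a b|a]; first by rewrite !charM invfM.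
by rewrite invr_neq0 ?char_neq0.
Qed.

Definition d1 : dual M C := exist (@is_char M C) _ d1_char.
Definition dmul (x y : dual M C) : dual M C := exist (@is_char M C) _ (dmul_char x y).
Definition dinv (x : dual M C) : dual M C := exist (@is_char M C) _ (dinv_char x).

Lemma chv_d1 a : chv d1 a = 1. Proof. by rewrite /chv /= ffunE. Qed.
Lemma chv_dmul x y a : chv (dmul x y) a = chv x a * chv y a.
Proof. by rewrite /chv /= ffunE. Qed.
Lemma chv_dinv x a : chv (dinv x) a = (chv x a)^-1.
Proof. by rewrite /chv /= ffunE. Qed.

Lemma dmulA : associative dmul.
Proof. by move=> x y z; apply: dual_eq => a; rewrite !chv_dmul mulrA. Qed.
Lemma dmulC : commutative dmul.
Proof. by move=> x y; apply: dual_eq => a; rewrite !chv_dmul mulrC. Qed.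
Lemma dmul1 : left_id d1 dmul.
Proof. by move=> x; apply: dual_eq => a; rewrite !chv_dmul chv_d1 mul1r. Qed.
Lemma dmulV : left_inverse d1 dinv dmul.
Proof.
by move=> x; apply: dual_eq => a; rewrite !chv_dmul chv_dinv chv_d1 mulVf ?char_neq0.
Qed.

Lemma charV (x : dual M C) a : chv x (a^-1)%g = (chv x a)^-1.
Proof.
apply: (@mulfI _ (chv x a)); first exact: char_neq0.
by rewrite -charM mulgV char1 divff ?char_neq0.
Qed.

Definition pX : {poly C} := 'X^#|M| - 1%:P.
Definition rs : seq C := sval (closed_field_poly_normal pX).

Lemma char_rs (x : dual M C) a : chv x a \in rs.
Proof.
have m0 : (0 < #|M|)%N by apply/card_gt0P; exists 1%g.
have := svalP (closed_field_poly_normal pX); rewrite -/rs => e.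
rewrite -root_prod_XsubC -(@rootZ _ _ (lead_coef pX)); last first.
  by rewrite /pX lead_coefXnsubC // oner_neq0.
rewrite -e /root /pX !hornerE -charX.
have := expg_cardG (in_setT a); rewrite cardsT => ->.
by rewrite char1 subrr.
Qed.

Definition Lraw : seq (dual M C) :=
  pmap (fun f : {ffun M -> seq_sub rs} => (insub [ffun a => ssval (f a)] : option (dual M C)))
       (enum {ffun M -> seq_sub rs}).
Definition L := undup Lraw.

Lemma L_uniq : uniq L. Proof. exact: undup_uniq. Qed.
Lemma L_all x : x \in L.
Proof.
rewrite mem_undup mem_pmap.
pose f0 : {ffun M -> seq_sub rs} := [ffun a => SeqSub (char_rs x a)].
have -> : Some x = (insub [ffun a => ssval (f0 a)] : option (dual M C)).
  have -> : [ffun a => ssval (f0 a)] = val x by apply/ffunP => a; rewrite !ffunE.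
  by rewrite valK.
by apply: map_f; rewrite mem_enum.
Qed.

Lemma sumL_perm (h h' : dual M C -> dual M C) : cancel h h' -> cancel h' h ->
  forall F : dual M C -> C, \sum_(x <- L) F x = \sum_(x <- L) F (h x).
Proof.
move=> hh' h'h F; rewrite -(big_map h predT F); apply: perm_big.
apply: uniq_perm; rewrite ?L_uniq ?(map_inj_uniq (can_inj hh')) ?L_uniq //.
by move=> z; rewrite L_all -(h'h z) map_f ?L_all.
Qed.

Lemma sumL_pred1 x0 (G : dual M C -> C) : \sum_(x <- L) (x == x0)%:R * G x = G x0.
Proof.
rewrite (bigD1_seq x0) ?L_all ?L_uniq //= eqxx mul1r big1 ?addr0 //.
by move=> x /negPf ->; rewrite mul0r.
Qed.

Lemma sumM_pred1 (a0 : M) (G : M -> C) : \sum_(a : M) (a == a0)%:R * G a = G a0.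
Proof.
rewrite (bigD1 a0) //= eqxx mul1r big1 ?addr0 //.
by move=> a /negPf ->; rewrite mul0r.
Qed.

Lemma m_neq0 : (#|M|%:R : C) != 0.
Proof. by rewrite pnatr_eq0 -lt0n; apply/card_gt0P; exists 1%g. Qed.

Lemma sumM_char x : \sum_(a : M) chv x a = (x == d1)%:R * #|M|%:R.
Proof.
case: (eqVneq x d1) => [->|xd1].
  by rewrite mul1r (eq_bigr (fun _ => 1)) => [|a _]; rewrite ?chv_d1 // sumr_const.
have [a0 xa0] : exists a0, chv x a0 != 1.
  apply/existsP; apply: contraR xd1 => /existsPn h; apply/eqP/dual_eq => a.
  by rewrite chv_d1; apply/eqP; move: (h a); rewrite negbK.
rewrite mul0r; apply: (mulfI (x := 1 - chv x a0)); first by rewrite subr_eq0 eq_sym.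
rewrite mulr0 mulrBl mul1r; apply/eqP; rewrite subr_eq0 mulr_sumr.
rewrite (reindex_inj (mulgI a0)) /=; apply/eqP; apply: eq_bigr => a _.
by rewrite charM.
Qed.

Lemma orthoM (x y : dual M C) : \sum_(a : M) chv x a * (chv y a)^-1 = (x == y)%:R * #|M|%:R.
Proof.
have e : (dmul x (dinv y) == d1) = (x == y).
  apply/eqP/eqP => [e|->]; last by rewrite dmulC dmulV.
  by move/(congr1 (dmul^~ y)): e; rewrite -dmulA dmulV dmul1 dmulC dmul1.
rewrite -e -sumM_char; by apply: eq_bigr => a _; rewrite chv_dmul chv_dinv.
Qed.

Lemma sumL_char c : \sum_(x <- L) chv x c = (c == 1%g)%:R * (size L)%:R.
Proof.
case: (eqVneq c 1%g) => [->|c1].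
  rewrite mul1r (eq_bigr (fun _ => 1)) => [|x _]; rewrite ?char1 //.
  by rewrite -[in RHS]sum1_size natr_sum.
have [x0 x0c] := sep c1; rewrite mul0r.
apply: (mulfI (x := 1 - chv x0 c)); first by rewrite subr_eq0 eq_sym.
rewrite mulr0 mulrBl mul1r; apply/eqP; rewrite subr_eq0 mulr_sumr.
rewrite (@sumL_perm (dmul x0) (dmul (dinv x0))); last 2 first.
- by move=> x; rewrite dmulA dmulV dmul1.
- by move=> x; rewrite dmulA (dmulC x0) dmulV dmul1.
by apply/eqP; apply: eq_bigr => x _; rewrite chv_dmul.
Qed.

Lemma size_L : size L = #|M|.
Proof.
have := @exchange_big C 0 +%R _ _ L (index_enum M) xpredT xpredT (fun x a => chv x a).
rewrite (eq_bigr (fun x => (x == d1)%:R * #|M|%:R)) => [|x _]; last by rewrite sumM_char.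
rewrite -big_distrl /= -(mulr1 (\sum_(i <- L) _)).
rewrite (eq_bigr (fun x => (x == d1)%:R * 1)) => [|x _]; last by rewrite mulr1.
rewrite sumL_pred1 mul1r.
rewrite (eq_bigr (fun a => (a == 1%g)%:R * (size L)%:R)) => [|a _]; last by rewrite sumL_char.
rewrite -/(\sum_(a : M) _) (sumM_pred1 1%g (fun _ => (size L)%:R)).
by move=> e; apply/eqP; rewrite -(eqr_nat C) -e mul1r.
Qed.

Lemma orthoL a b : \sum_(x <- L) chv x a * (chv x b)^-1 = (a == b)%:R * #|M|%:R.
Proof.
rewrite -size_L -divg_eq1 -sumL_char; apply: eq_bigr => x _.
by rewrite charM charV.
Qed.

Lemma U1 (A B : dual M C -> C) :
  (forall a, \sum_(x <- L) chv x a * A x = \sum_(x <- L) chv x a * B x) ->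
  forall x, A x = B x.
Proof.
move=> h x0.
have key : forall F : dual M C -> C,
    \sum_(a : M) (\sum_(x <- L) chv x a * F x) * (chv x0 a)^-1 = #|M|%:R * F x0.
  move=> F; under eq_bigr do rewrite big_distrl /=.
  rewrite exchange_big /= -(sumL_pred1 x0 (fun x => #|M|%:R * F x)).
  apply: eq_bigr => x _.
  rewrite mulrA -orthoM mulr_suml; apply: eq_bigr => a _.
  by rewrite mulrAC.
apply: (mulfI m_neq0); rewrite -!key; apply: eq_bigr => a _; by rewrite h.
Qed.

End Ext.

Section Fourier.
Variables (C : numClosedFieldType) (M : finGroupType).
Hypothesis Mab : abelian [set: M].
Local Notation D := (dual M C).
Local Notation LL := (L C M).
Local Notation m := (#|M|%:R : C).

Lemma inv1 (G : M -> C) a :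
  \sum_(x <- LL) (\sum_(c : M) G c * (chv x c)^-1) * chv x a = m * G a.
Proof.
under eq_bigr do rewrite mulr_suml.
rewrite exchange_big /= -(sumM_pred1 a (fun c => m * G c)).
apply: eq_bigr => c _.
rewrite (eq_bigr (fun x => G c * (chv x a * (chv x c)^-1))); last first.
  by move=> x _; rewrite mulrAC mulrA.
by rewrite -mulr_sumr orthoL // eq_sym mulrCA (mulrC (G c)).
Qed.

Section J.
Variable J : M -> M -> C.

Definition N (x y : D) : C :=
  m^-1 * \sum_(b : M) (\sum_(a : M) J a b * (chv x a)^-1) * (chv y b)^-1.

Lemma JE a b : J a b = m^-1 * \sum_(x <- LL) \sum_(y <- LL) N x y * chv x a * chv y b.
Proof.
have e1 : forall x, \sum_(y <- LL) N x y * chv y b = \sum_(a' : M) J a' b * (chv x a')^-1.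
  move=> x; rewrite /N; under eq_bigr do rewrite -mulrA.
  by rewrite -mulr_sumr inv1 mulrA mulVf ?m_neq0 // mul1r.
rewrite (eq_bigr (fun x => (\sum_(y <- LL) N x y * chv y b) * chv x a)); last first.
  by move=> x _; rewrite mulr_suml; apply: eq_bigr => y _; rewrite mulrAC.
under eq_bigr do rewrite e1.
by rewrite inv1 mulrA mulVf ?m_neq0 // mul1r.
Qed.

Lemma N_sym : (forall a b, J a b = J b a) -> forall x y, N x y = N y x.
Proof.
move=> Js x y; rewrite /N; congr (_ * _).
under eq_bigr do rewrite mulr_suml.
under [RHS]eq_bigr do rewrite mulr_suml.
rewrite [RHS]exchange_big /=; apply: eq_bigr => b _; apply: eq_bigr => a _.
by rewrite Js mulrAC.
Qed.


Definition nest2 (F : D -> D -> C) a b :=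
  \sum_(x <- LL) chv x a * \sum_(y <- LL) chv y b * F x y.
Definition nest3 (F : D -> D -> D -> C) a b c :=
  \sum_(x <- LL) chv x a * \sum_(y <- LL) chv y b * \sum_(z <- LL) chv z c * F x y z.
Definition nest4 (F : D -> D -> D -> D -> C) a b c d :=
  \sum_(x <- LL) chv x a * \sum_(y <- LL) chv y b *
    \sum_(z <- LL) chv z c * \sum_(w <- LL) chv w d * F x y z w.

Lemma U2 F G : (forall a b, nest2 F a b = nest2 G a b) -> forall x y, F x y = G x y.
Proof.
move=> h x.
apply: (@U1 _ _ (fun y => F x y) (fun y => G x y)) => b.
exact: (@U1 _ _ (fun x => \sum_(y <- LL) chv y b * F x y)
                (fun x => \sum_(y <- LL) chv y b * G x y) (fun a => h a b)).
Qed.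

Lemma U3 F G : (forall a b c, nest3 F a b c = nest3 G a b c) -> forall x y z, F x y z = G x y z.
Proof.
move=> h x y.
apply: (@U1 _ _ (fun z => F x y z) (fun z => G x y z)) => c.
apply: (@U1 _ _ (fun y => \sum_(z <- LL) chv z c * F x y z)
                (fun y => \sum_(z <- LL) chv z c * G x y z)) => b.
exact: (@U1 _ _ (fun x => \sum_(y <- LL) chv y b * \sum_(z <- LL) chv z c * F x y z)
                (fun x => \sum_(y <- LL) chv y b * \sum_(z <- LL) chv z c * G x y z)
                (fun a => h a b c)).
Qed.

Lemma U4 F G : (forall a b c d, nest4 F a b c d = nest4 G a b c d) ->
  forall x y z w, F x y z w = G x y z w.
Proof.
move=> h x y z.
apply: (@U1 _ _ (fun w => F x y z w) (fun w => G x y z w)) => d.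
apply: (@U1 _ _ (fun z => \sum_(w <- LL) chv w d * F x y z w)
                (fun z => \sum_(w <- LL) chv w d * G x y z w)) => c.
apply: (@U1 _ _ (fun y => \sum_(z <- LL) chv z c * \sum_(w <- LL) chv w d * F x y z w)
                (fun y => \sum_(z <- LL) chv z c * \sum_(w <- LL) chv w d * G x y z w)) => b.
exact: (@U1 _ _
  (fun x => \sum_(y <- LL) chv y b * \sum_(z <- LL) chv z c * \sum_(w <- LL) chv w d * F x y z w)
  (fun x => \sum_(y <- LL) chv y b * \sum_(z <- LL) chv z c * \sum_(w <- LL) chv w d * G x y z w)
  (fun a => h a b c d)).
Qed.

Lemma nest4_flat F a b c d : nest4 F a b c d =
  \sum_(x <- LL) \sum_(y <- LL) \sum_(z <- LL) \sum_(w <- LL)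
     chv x a * (chv y b * (chv z c * (chv w d * F x y z w))).
Proof.
rewrite /nest4; apply: eq_bigr => x _; rewrite mulr_sumr; apply: eq_bigr => y _.
rewrite !mulr_sumr; apply: eq_bigr => z _; rewrite !mulr_sumr.
by apply: eq_bigr => w _.
Qed.

Lemma prod4 (f g : D -> D -> C) :
  (\sum_(x <- LL) \sum_(y <- LL) f x y) * (\sum_(z <- LL) \sum_(w <- LL) g z w) =
  \sum_(x <- LL) \sum_(y <- LL) \sum_(z <- LL) \sum_(w <- LL) f x y * g z w.
Proof.
rewrite mulr_suml; apply: eq_bigr => x _; rewrite mulr_suml; apply: eq_bigr => y _.
rewrite mulr_sumr; apply: eq_bigr => z _; by rewrite mulr_sumr.
Qed.

Lemma swap5 (F : M -> D -> D -> D -> D -> C) :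
  \sum_(b : M) \sum_(x <- LL) \sum_(y <- LL) \sum_(z <- LL) \sum_(w <- LL) F b x y z w =
  \sum_(x <- LL) \sum_(y <- LL) \sum_(z <- LL) \sum_(w <- LL) \sum_(b : M) F b x y z w.
Proof.
rewrite exchange_big; apply: eq_bigr => x _; rewrite exchange_big; apply: eq_bigr => y _.
rewrite exchange_big; apply: eq_bigr => z _; by rewrite exchange_big.
Qed.

Lemma C_lhs a1 a2 a3 a4 :
  \sum_(b : M) J (a1 * b)%g (a2 * b^-1)%g * J (a3 * b)%g (a4 * b^-1)%g =
  m^-1 * nest4 (fun x y z w => (dmul x z == dmul y w)%:R * N x y * N z w) a1 a2 a3 a4.
Proof.
under eq_bigr => b _ do rewrite [J (a1 * b)%g _]JE [J (a3 * b)%g _]JE mulrACA prod4.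
rewrite -mulr_sumr swap5 nest4_flat -mulrA; congr (_ * _).
have inner : forall x y z w,
  \sum_(b : M) N x y * chv x (a1 * b)%g * chv y (a2 * b^-1)%g *
               (N z w * chv z (a3 * b)%g * chv w (a4 * b^-1)%g) =
  m * (chv x a1 * (chv y a2 * (chv z a3 * (chv w a4 *
        ((dmul x z == dmul y w)%:R * N x y * N z w))))).
  move=> x y z w.
  rewrite (eq_bigr (fun b => (chv x a1 * chv y a2 * chv z a3 * chv w a4 * N x y * N z w) *
                   (chv (dmul x z) b * (chv (dmul y w) b)^-1))); last first.
    move=> b _; rewrite !chv_dmul !charM !charV invfM; ring.
  rewrite -mulr_sumr orthoM; ring.
under eq_bigr => x _ do under eq_bigr => y _ do under eq_bigr => z _ do
  under eq_bigr => w _ do rewrite inner.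
under eq_bigr => x _ do under eq_bigr => y _ do under eq_bigr => z _ do rewrite -mulr_sumr.
under eq_bigr => x _ do under eq_bigr => y _ do rewrite -mulr_sumr.
under eq_bigr => x _ do rewrite -mulr_sumr.
by rewrite -mulr_sumr mulrA mulVf ?m_neq0 // mul1r.
Qed.

Lemma C_rhs a1 a2 a3 a4 :
  J (a1 * a4)%g (a2 * a3)%g =
  m^-1 * nest4 (fun x y z w => (z == y)%:R * (w == x)%:R * N x y) a1 a2 a3 a4.
Proof.
rewrite JE /nest4; congr (_ * _); apply: eq_bigr => x _.
rewrite mulr_sumr; apply: eq_bigr => y _.
rewrite (eq_bigr (fun z => (z == y)%:R * (chv z a3 * (chv x a4 * N x y)))); last first.
  move=> z _; rewrite (eq_bigr (fun w => (w == x)%:R * (chv w a4 * ((z == y)%:R * N x y)))).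
    by rewrite sumL_pred1; ring.
  by move=> w _; ring.
by rewrite sumL_pred1 !charM; ring.
Qed.

Lemma Cprime (JC : forall a1 a2 a3 a4,
    \sum_(b : M) J (a1 * b)%g (a2 * b^-1)%g * J (a3 * b)%g (a4 * b^-1)%g =
    J (a1 * a4)%g (a2 * a3)%g) :
  forall x y z w, (dmul x z == dmul y w)%:R * N x y * N z w = (z == y)%:R * (w == x)%:R * N x y.
Proof.
apply: U4 => a b c d; apply: (mulfI (x := m^-1)); first by rewrite invr_neq0 ?m_neq0.
by rewrite -C_lhs -C_rhs JC.
Qed.


Definition Ns' (x y : D) : C := N x y - (x == d1 C M)%:R - (y == d1 C M)%:R.
Definition Js a b := - delta C a - delta C b + J a b.

Lemma deltaE (a : M) : delta C a = (a == 1%g)%:R.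
Proof. by rewrite /delta; case: (a == 1%g). Qed.

Lemma sumL_char' c : \sum_(x <- LL) chv x c = (c == 1%g)%:R * m.
Proof. by rewrite sumL_char // size_L. Qed.

Lemma JsE a b : Js a b = m^-1 * \sum_(x <- LL) \sum_(y <- LL) Ns' x y * chv x a * chv y b.
Proof.
have e2 : \sum_(x <- LL) \sum_(y <- LL) (x == d1 C M)%:R * chv x a * chv y b = (b == 1%g)%:R * m.
  rewrite (eq_bigr (fun x => (x == d1 C M)%:R * (chv x a * \sum_(y <- LL) chv y b))); last first.
    by move=> x _; rewrite !mulr_sumr; apply: eq_bigr => y _; rewrite !mulrA.
  by rewrite sumL_pred1 chv_d1 mul1r sumL_char'.
have e3 : \sum_(x <- LL) \sum_(y <- LL) (y == d1 C M)%:R * chv x a * chv y b = (a == 1%g)%:R * m.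
  rewrite exchange_big /=.
  rewrite (eq_bigr (fun y => (y == d1 C M)%:R * (chv y b * \sum_(x <- LL) chv x a))); last first.
    by move=> y _; rewrite !mulr_sumr; apply: eq_bigr => x _; ring.
  by rewrite sumL_pred1 chv_d1 mul1r sumL_char'.
rewrite (eq_bigr (fun x => \sum_(y <- LL) N x y * chv x a * chv y b
     - \sum_(y <- LL) (x == d1 C M)%:R * chv x a * chv y b
     - \sum_(y <- LL) (y == d1 C M)%:R * chv x a * chv y b)); last first.
  by move=> x _; rewrite -!sumrB; apply: eq_bigr => y _; rewrite /Ns' !mulrBl.
rewrite !sumrB e2 e3 !mulrBr -JE /Js !deltaE !(mulrCA _^-1) mulVf ?m_neq0 // !mulr1.
ring.
Qed.

Lemma dmulK (u x : D) : dmul (dmul x u) (dinv u) = x.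
Proof. by rewrite -dmulA (dmulC u) dmulV (dmulC x) dmul1. Qed.
Lemma dmulKV (u x : D) : dmul (dmul x (dinv u)) u = x.
Proof. by rewrite -dmulA dmulV (dmulC x) dmul1. Qed.

Lemma reidx (u : D) (F : D -> C) : \sum_(x <- LL) F x = \sum_(x <- LL) F (dmul x u).
Proof.
exact: (@sumL_perm _ _ (fun x => dmul x u) (fun x => dmul x (dinv u)) (dmulK u) (dmulKV u) F).
Qed.

Lemma nest3_flat F a b c : nest3 F a b c =
  \sum_(x <- LL) \sum_(y <- LL) \sum_(z <- LL) chv x a * (chv y b * (chv z c * F x y z)).
Proof.
rewrite /nest3; apply: eq_bigr => x _; rewrite mulr_sumr; apply: eq_bigr => y _.
by rewrite !mulr_sumr.
Qed.

Lemma B_lhs a b c : Js a b * Js (a * b)%g c = m^-1 * m^-1 *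
  nest3 (fun p q r => \sum_(u <- LL) Ns' (dmul p (dinv u)) (dmul q (dinv u)) * Ns' u r) a b c.
Proof.
rewrite !JsE mulrACA prod4 nest3_flat; congr (_ * _).
under [RHS]eq_bigr => p _ do under eq_bigr => q _ do under eq_bigr => r _ do rewrite !mulr_sumr.
under [RHS]eq_bigr => p _ do under eq_bigr => q _ do rewrite exchange_big.
under [RHS]eq_bigr => p _ do rewrite exchange_big.
rewrite [RHS]exchange_big /=.
under [LHS]eq_bigr => x _ do rewrite exchange_big.
rewrite [LHS]exchange_big /=.
apply: eq_bigr => u _.
rewrite [RHS](reidx u); apply: eq_bigr => x _.
rewrite [RHS](reidx u); apply: eq_bigr => y _.
apply: eq_bigr => v _.
by rewrite !dmulK !chv_dmul !charM; ring.
Qed.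

Lemma B_rhs a b c : Js a (b * c)%g * Js b c = m^-1 * m^-1 *
  nest3 (fun p q r => \sum_(y <- LL) Ns' p y * Ns' (dmul q (dinv y)) (dmul r (dinv y))) a b c.
Proof.
rewrite !JsE mulrACA prod4 nest3_flat; congr (_ * _).
under [RHS]eq_bigr => p _ do under eq_bigr => q _ do under eq_bigr => r _ do rewrite !mulr_sumr.
under [RHS]eq_bigr => p _ do under eq_bigr => q _ do rewrite exchange_big.
under [RHS]eq_bigr => p _ do rewrite exchange_big.
apply: eq_bigr => x _; apply: eq_bigr => y _.
rewrite [RHS](reidx y); apply: eq_bigr => u _.
rewrite [RHS](reidx y); apply: eq_bigr => v _.
by rewrite !dmulK !chv_dmul !charM; ring.
Qed.

Lemma Bprime (JB : forall a b c, Js a b * Js (a * b)%g c = Js a (b * c)%g * Js b c) :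
  forall p q r,
  \sum_(u <- LL) Ns' (dmul p (dinv u)) (dmul q (dinv u)) * Ns' u r =
  \sum_(y <- LL) Ns' p y * Ns' (dmul q (dinv y)) (dmul r (dinv y)).
Proof.
apply: U3 => a b c; apply: (mulfI (x := m^-1 * m^-1)).
  by rewrite mulf_neq0 // invr_neq0 ?m_neq0.
by rewrite -B_lhs -B_rhs JB.
Qed.

End J.
End Fourier.

Section Abstract.
Variables (G : eqType) (gm : G -> G -> G) (gi : G -> G) (g1 : G).
Hypotheses (gmA : associative gm) (gmC : commutative gm) (gm1 : left_id g1 gm)
  (gmV : left_inverse g1 gi gm).

Local Notation "x ** y" := (gm x y) (at level 40, left associativity).

Lemma gm1r x : x ** g1 = x. Proof. by rewrite gmC gm1. Qed.
Lemma gmVr x : x ** gi x = g1. Proof. by rewrite gmC gmV. Qed.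
Lemma gmK x y : gi x ** (x ** y) = y. Proof. by rewrite gmA gmV gm1. Qed.
Lemma gmKV x y : x ** (gi x ** y) = y. Proof. by rewrite gmA gmVr gm1. Qed.
Lemma gmI t : injective (gm t).
Proof. by move=> x y e; rewrite -(gmK t x) e gmK. Qed.
Lemma inv_uniq a b : a ** b = g1 -> gi a = b.
Proof. by move=> e; rewrite -(gm1r (gi a)) -e gmK. Qed.
Lemma giK : involutive gi.
Proof. by move=> x; apply: inv_uniq; rewrite gmV. Qed.
Lemma gmCA x y z : x ** (y ** z) = y ** (x ** z).
Proof. by rewrite !gmA (gmC x). Qed.
Lemma gmACA x y z w : (x ** y) ** (z ** w) = (x ** z) ** (y ** w).
Proof. by rewrite -!gmA (gmCA y). Qed.
Lemma giM x y : gi (x ** y) = gi x ** gi y.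
Proof.
by apply: inv_uniq; rewrite gmACA !gmVr gm1.
Qed.
Lemma gi1 : gi g1 = g1. Proof. by apply: inv_uniq; rewrite gm1. Qed.

Lemma dv_eq1 a u : (a ** gi u == g1) = (u == a).
Proof.
apply/eqP/eqP => [e|->]; last exact: gmVr.
by move/inv_uniq: e => /(can_inj giK) ->.
Qed.

Variable L : seq G.
Hypotheses (Lu : uniq L) (Lall : forall x, x \in L).
Variable r0 : G.
Hypothesis r0n1 : r0 != g1.
Variable R : numDomainType.
Variable Nb : G -> G -> bool.
Hypothesis Nsym : forall x y, Nb x y = Nb y x.
Hypothesis NP : forall x y x' y', Nb x y -> Nb x' y' -> x ** x' = y ** y' -> x' = y /\ y' = x.

Definition Ns x y : R := (Nb x y)%:R - (x == g1)%:R - (y == g1)%:R.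

Hypothesis NE : forall a b c,
  \sum_(u <- L) Ns (a ** gi u) (b ** gi u) * Ns u c =
  \sum_(y <- L) Ns a y * Ns (b ** gi y) (c ** gi y).

Definition add2 x y : option G := ohead [seq z <- L | Nb (x ** gi z) (y ** gi z)].

Definition add (X Y : option G) : option G :=
  match X, Y with
  | Some x, Some y => add2 x y
  | None, _ => Y
  | _, None => X
  end.

Definition omul (X Y : option G) : option G :=
  match X, Y with
  | Some x, Some y => Some (x ** y)
  | _, _ => None
  end.

Lemma opt_ext (o1 o2 : option G) : (forall z, (o1 == Some z) = (o2 == Some z)) -> o1 = o2.
Proof.
case: o1 => [x|]; case: o2 => [y|] // h.
- by move: (h x); rewrite eqxx => /esym/eqP <-.
- by move: (h x); rewrite eqxx.
- by move: (h y); rewrite eqxx.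
Qed.

Lemma add2P x y z : (add2 x y == Some z) = Nb (x ** gi z) (y ** gi z).
Proof.
rewrite /add2; set s := [seq z <- L | _].
have memS : forall w, (w \in s) = Nb (x ** gi w) (y ** gi w).
  by move=> w; rewrite mem_filter Lall andbT.
apply/eqP/idP => [|h].
  case e: s memS => [|w s'] //= memS' [<-].
  by rewrite -memS' mem_head.
have hall : forall w, w \in s -> w = z.
  move=> w; rewrite memS => hw.
  have hw' : Nb (y ** gi w) (x ** gi w) by rewrite Nsym.
  have e : (x ** gi z) ** (y ** gi w) = (y ** gi z) ** (x ** gi w).
    by rewrite gmACA (gmC x) gmACA.
  by have [/gmI /(can_inj giK) -> _] := NP h hw' e.
have : z \in s by rewrite memS.
case: s hall memS => [|w s'] //= hall _ _.
by rewrite (hall w (mem_head _ _)).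
Qed.

Lemma add2C x y : add2 x y = add2 y x.
Proof. by apply: opt_ext => z; rewrite !add2P Nsym. Qed.

Lemma omapM t (o : option G) z : (omap (gm t) o == Some z) = (o == Some (gi t ** z)).
Proof.
case: o => [w|] //=; apply/eqP/eqP => [[<-]|[->]]; first by rewrite gmK.
by rewrite gmKV.
Qed.

Lemma add2M t x y : add2 (t ** x) (t ** y) = omap (gm t) (add2 x y).
Proof.
apply: opt_ext => z; rewrite omapM !add2P giM giK.
by rewrite !gmA (gmC x) (gmC y).
Qed.

Lemma addC : commutative add.
Proof. by case=> [x|] [y|] //=; rewrite add2C. Qed.
Lemma add0 : left_id None add. Proof. by case. Qed.
Lemma addn0 X : add X None = X. Proof. by case: X. Qed.

Lemma omulE t o : omul (Some t) o = omap (gm t) o. Proof. by case: o. Qed.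

Lemma addM t X Y : omul (Some t) (add X Y) = add (omul (Some t) X) (omul (Some t) Y).
Proof.
case: X => [x|]; case: Y => [y|] //=.
by rewrite add2M; case: (add2 x y).
Qed.

Lemma add2M' t y z : omul (Some t) (add2 y z) = add2 (t ** y) (t ** z).
Proof. exact: (addM t (Some y) (Some z)). Qed.

Lemma sumL1 (a : G) (F : G -> R) : \sum_(u <- L) (u == a)%:R * F u = F a.
Proof.
rewrite (bigD1_seq a) ?Lall //= eqxx mul1r big1 ?addr0 //.
by move=> x /negPf ->; rewrite mul0r.
Qed.

Lemma sumLo (o : option G) (F : G -> R) : \sum_(u <- L) (o == Some u)%:R * F u = oapp F 0 o.
Proof.
case: o => [w|] /=; last by rewrite big1 // => u _; rewrite mul0r.
rewrite -(sumL1 w F); apply: eq_bigr => u _.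
by rewrite eq_sym.
Qed.

Lemma key_sum (o : option G) a b (F : G -> R) :
  \sum_(u <- L) ((o == Some u)%:R - (u == a)%:R - (u == b)%:R) * F u = oapp F 0 o - F a - F b.
Proof.
rewrite (eq_bigr (fun u => (o == Some u)%:R * F u - (u == a)%:R * F u - (u == b)%:R * F u)).
  by rewrite !sumrB sumLo !sumL1.
by move=> u _; rewrite !mulrBl.
Qed.

Lemma NsE x y : Ns x y = (add2 x y == Some g1)%:R - (x == g1)%:R - (y == g1)%:R.
Proof. by rewrite /Ns add2P gi1 !gm1r. Qed.

Lemma bool_natr_inj (b1 b2 : bool) : (b1%:R : R) = b2%:R -> b1 = b2.
Proof. by case: b1; case: b2 => // /eqP; rewrite ?oner_eq0 // eq_sym oner_eq0. Qed.

Lemma assoc1 a b c :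
  (add (add2 a b) (Some c) == Some g1) = (add (Some a) (add2 b c) == Some g1).
Proof.
have := NE a b c.
rewrite (eq_bigr (fun u => ((add2 a b == Some u)%:R - (u == a)%:R - (u == b)%:R) * Ns u c));
  last by move=> u _; rewrite /Ns add2P !dv_eq1.
rewrite [RHS](eq_bigr (fun y => ((add2 b c == Some y)%:R - (y == b)%:R - (y == c)%:R) * Ns a y));
  last by move=> y _; rewrite mulrC /Ns add2P !dv_eq1.
rewrite !key_sum.
have E1 : oapp (Ns^~ c) 0 (add2 a b) = (add (add2 a b) (Some c) == Some g1)%:R
    - (add2 a b == Some g1)%:R - (c == g1)%:R.
  case: (add2 a b) => [w|] /=; first by rewrite NsE.
  by rewrite subr0 subrr.
have E2 : oapp (Ns a) 0 (add2 b c) = (add (Some a) (add2 b c) == Some g1)%:R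
    - (add2 b c == Some g1)%:R - (a == g1)%:R.
  case: (add2 b c) => [w|] /=; first by rewrite NsE; ring.
  by rewrite subr0 subrr.
rewrite E1 E2 (NsE b c) (NsE a b) => H.
apply: bool_natr_inj; apply/eqP; rewrite -subr_eq0.
move/eqP: H; rewrite -subr_eq0 => /eqP H.
rewrite -[X in _ == X]H; apply/eqP; ring.
Qed.

Lemma scale_eq t o w : (omul (Some t) o == Some (t ** w)) = (o == Some w).
Proof.
case: o => [v|] //=; apply/eqP/eqP => [[/gmI ->]|[->]] //.
Qed.

Lemma addA : associative add.
Proof.
move=> [x|] [y|] [z|] //; rewrite ?addn0 //.
apply: opt_ext => w.
rewrite -[LHS](scale_eq (gi w)) -[RHS](scale_eq (gi w)) gmV !addM.
have oS : forall t v, omul (Some t) (Some v) = Some (t ** v) by [].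
by rewrite !oS; symmetry; exact: assoc1.
Qed.

Definition Ssum (l : seq G) := foldr (fun x acc => add (Some x) acc) None l.

Lemma Ssum_cons a l : Ssum (a :: l) = add (Some a) (Ssum l). Proof. by []. Qed.

Lemma Ssum_cons_mid p1 a p2 : Ssum (p1 ++ a :: p2) = add (Some a) (Ssum (p1 ++ p2)).
Proof.
elim: p1 => [|b p1 IH] //; rewrite !cat_cons !Ssum_cons IH.
by rewrite addA (addC (Some b)) -addA.
Qed.

Lemma Ssum_perm l1 l2 : perm_eq l1 l2 -> Ssum l1 = Ssum l2.
Proof.
elim: l1 l2 => [|a l1 IH] l2 pe.
  by move: (perm_size pe) => /esym/eqP; rewrite size_eq0 => /eqP ->.
have al2 : a \in l2 by rewrite -(perm_mem pe) mem_head.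
move: pe; case/splitPr: al2 => p1 p2 pe.
rewrite Ssum_cons_mid Ssum_cons (IH (p1 ++ p2)) //.
by rewrite -(perm_cons a); apply: (perm_trans pe); rewrite -[a :: p2]cat1s perm_catCA.
Qed.

Lemma Ssum_scale t l : omul (Some t) (Ssum l) = Ssum (map (gm t) l).
Proof. by elim: l => [|a l IH] //; rewrite map_cons !Ssum_cons addM IH. Qed.

Lemma add_neg : exists e, add2 g1 e = None.
Proof.
case: (boolP (has (fun e => add2 g1 e == None) L)) => [/hasP[e _ /eqP] | hn]; first by exists e.
exfalso.
have nz : forall x y, add2 x y != None.
  move=> x y; have := (hasPn hn) (gi x ** y) (Lall _).
  have -> : add2 x y = add2 (x ** g1) (x ** (gi x ** y)) by rewrite gm1r gmKV.
  by rewrite add2M; case: (add2 g1 _).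
have Snz : forall l, l != [::] -> Ssum l != None.
  elim=> [|a l IH] // _; rewrite Ssum_cons; case: l IH => [|b l] IH; first by [].
  move: (IH isT); rewrite Ssum_cons; case: (add (Some b) _) => // s _.
  exact: nz.
have pe : perm_eq (map (gm r0) L) L.
  apply: uniq_perm; rewrite ?(map_inj_uniq (@gmI r0)) // => z.
  by rewrite Lall -(gmKV r0 z) map_f.
have := Ssum_scale r0 L; rewrite (Ssum_perm pe).
have : Ssum L != None by apply: Snz; case: L Lall => // /(_ g1).
case: (Ssum L) => //= s _ [].
rewrite -{2}(gm1 s) (gmC r0) (gmC g1) => /gmI e.
by move: r0n1; rewrite e eqxx.
Qed.

Lemma abstract_field : field_axioms add omul None (Some g1).
Proof.
split.
- exact: addA.
- exact: addC.
- exact: add0.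
- case=> [x|]; last by exists None.
  have [e he] := add_neg; exists (Some (x ** e)) => /=.
  by rewrite -(gm1r x) -gmA gm1 add2M he.
split.
- by move=> [x|] [y|] [z|] //=; rewrite gmA.
- by move=> [x|] [y|] //=; rewrite gmC.
- by move=> [x|] //=; rewrite gm1.
- by [].
split.
- move=> X Y [t|]; last by case: (add X Y) => [?|]; case: X => [?|]; case: Y => [?|].
  have mC : forall Z, omul Z (Some t) = omul (Some t) Z by case=> //= z; rewrite gmC.
  by rewrite !mC addM.
- case=> [x|] // _; exists (Some (gi x)) => /=; by rewrite gmVr.
Qed.

End Abstract.

Section Final.
Variables (C : numClosedFieldType) (M : finGroupType) (J : M -> M -> C).
Local Notation D := (dual M C).
Local Notation LL := (L C M).
Local Notation m := (#|M|%:R : C).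
Local Notation d1 := (d1 C M).

Lemma js_eq (add' : Fset M C -> Fset M C -> Fset M C) one a b :
  jacobi_sum add' one a b =
  m^-1 * \sum_(x <- LL) \sum_(y <- LL) (add' (Some x) (Some y) == one)%:R * (chv x a * chv y b).
Proof.
rewrite /jacobi_sum; congr (_ * _).
pose Pb : {pred D * D} := [pred p | add' (Some p.1) (Some p.2) == one].
have -> : classical_sets.mkset (fun p : D * D => add' (Some p.1) (Some p.2) = one) =
          classical_sets.mkset (fun p => p \in Pb).
  apply: boolp.funext => p; apply: boolp.propext; rewrite /Pb /classical_sets.mkset /= inE /=.
  by split => [->|/eqP].
rewrite -(@fsbigop.bigfs C 0 +%R _ [seq (x, y) | x <- LL, y <- LL]); last 2 first.
- apply: allpairs_uniq; rewrite ?L_uniq //.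
  by move=> [x1 y1] [x2 y2] _ _.
- by move=> [x y] _; rewrite (allpairs_f pair (L_all x) (L_all y)).
rewrite big_mkcond big_allpairs; apply: eq_bigr => x _; apply: eq_bigr => y _.
by rewrite /Pb inE /=; case: (_ == _); rewrite ?mul1r ?mul0r.
Qed.

Lemma flat2 (F : D -> D -> C) a b :
  \sum_(x <- LL) \sum_(y <- LL) F x y * (chv x a * chv y b) = nest2 F a b.
Proof.
rewrite /nest2; apply: eq_bigr => x _; rewrite mulr_sumr; apply: eq_bigr => y _.
by rewrite mulrC mulrA.
Qed.

Hypotheses (Mab : abelian [set: M]) (M2 : (2 <= #|M|)%N) (HJ : is_Jacobi J).

Lemma Jsym : forall a b, J a b = J b a. Proof. by case: HJ. Qed.
Lemma JB : forall a b c, Js J a b * Js J (a * b)%g c = Js J a (b * c)%g * Js J b c.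
Proof. by case: HJ. Qed.
Lemma JC : forall a1 a2 a3 a4,
    \sum_(b : M) J (a1 * b)%g (a2 * b^-1)%g * J (a3 * b)%g (a4 * b^-1)%g =
    J (a1 * a4)%g (a2 * a3)%g.
Proof. by case: HJ. Qed.

Definition Nb (x y : D) : bool := N J x y == 1.

Lemma N01 x y : N J x y = (Nb x y)%:R.
Proof.
have := Cprime Mab JC x y y x; rewrite (dmulC y x) !eqxx !mulr1n !mul1r (N_sym Jsym y x) => e.
rewrite /Nb; case: (eqVneq (N J x y) 1) => [->|n1] //.
have : N J x y * (N J x y - 1) == 0 by rewrite mulrBr mulr1 e subrr.
by rewrite mulf_eq0 subr_eq0 (negPf n1) orbF => /eqP.
Qed.

Lemma NbP x y x' y' : Nb x y -> Nb x' y' -> dmul x x' = dmul y y' -> x' = y /\ y' = x.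
Proof.
move=> /eqP h1 /eqP h2 h3; have := Cprime Mab JC x y x' y'.
rewrite h1 h2 h3 eqxx !mulr1.
case: (x' =P y) => [->|_]; case: (y' =P x) => [->|_] //; rewrite ?mul0r ?mulr0 /=.
- by move/eqP; rewrite oner_eq0.
- by move/eqP; rewrite oner_eq0.
- by move/eqP; rewrite oner_eq0.
Qed.

Lemma Nbsym x y : Nb x y = Nb y x.
Proof. by rewrite /Nb N_sym //; apply: Jsym. Qed.

Lemma NsE' x y : Ns' J x y = Ns d1 C Nb x y.
Proof. by rewrite /Ns' /Ns N01. Qed.

Lemma NbE a b c :
  \sum_(u <- LL) Ns d1 C Nb (dmul a (dinv u)) (dmul b (dinv u)) * Ns d1 C Nb u c =
  \sum_(y <- LL) Ns d1 C Nb a y * Ns d1 C Nb (dmul b (dinv y)) (dmul c (dinv y)).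
Proof.
under eq_bigr do rewrite -!NsE'.
under [RHS]eq_bigr do rewrite -!NsE'.
exact: (Bprime Mab JB).
Qed.

Lemma r0_ex : exists r0 : D, r0 != d1.
Proof.
have sz : (1 < size LL)%N by rewrite size_L.
have u := L_uniq C M.
have ne : nth d1 LL 0 != nth d1 LL 1 by rewrite nth_uniq // (ltn_trans _ sz).
case: (eqVneq (nth d1 LL 0) d1) => [e|]; last by exists (nth d1 LL 0).
by exists (nth d1 LL 1); rewrite -{2}e eq_sym.
Qed.

Definition addF := add (@dmul C M) (@dinv C M) LL Nb.
Definition mulF := omul (@dmul C M).

Lemma fieldF : field_axioms addF mulF None (Some d1).
Proof.
have [r0 r0n1] := r0_ex.
exact: (abstract_field (@dmulA C M) (@dmulC C M) (@dmul1 C M) (@dmulV C M)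
          (L_uniq C M) (@L_all C M) r0n1 Nbsym NbP NbE).
Qed.

Lemma addFP x y z : (addF (Some x) (Some y) == Some z) = Nb (dmul x (dinv z)) (dmul y (dinv z)).
Proof.
exact: (add2P (@dmulA C M) (@dmulC C M) (@dmul1 C M) (@dmulV C M) (@L_all C M) Nbsym NbP).
Qed.

Lemma dinv1 : dinv d1 = d1.
Proof. by apply: dual_eq => a; rewrite chv_dinv chv_d1 invr1. Qed.

Lemma mulF_ext : extends_dual_law mulF.
Proof. by move=> x y; exists (dmul x y); split => // a; rewrite chv_dmul. Qed.

Lemma JF a b : J a b = jacobi_sum addF (Some d1) a b.
Proof.
rewrite js_eq (JE Mab); congr (_ * _); apply: eq_bigr => x _; apply: eq_bigr => y _.
by rewrite addFP dinv1 (dmulC x) (dmulC y) !dmul1 N01 mulrA.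
Qed.

Lemma uniqF add' mul' one' : field_axioms add' mul' None one' -> extends_dual_law mul' ->
  (forall a b, J a b = jacobi_sum add' one' a b) ->
  [/\ add' = addF, mul' = mulF & one' = Some d1].
Proof.
case=> aA aC a0 aN [mA mC m1 on0 [mD mI]] E' JE'.
have mNone : forall Y, mul' None Y = None.
  move=> Y; have := mD None None Y; rewrite a0; set w := mul' None Y => ww.
  have [v hv] := aN w.
  by rewrite -hv [in RHS]ww -aA hv aC a0.
have mulE : mul' = mulF.
  apply: boolp.funext => X; apply: boolp.funext => Y.
  case: X => [x|]; last by rewrite mNone.
  case: Y => [y|]; last by rewrite mC mNone.
  have [z [hz hz']] := E' x y; rewrite hz /mulF /=.
  by congr Some; apply: dual_eq => a; rewrite hz' chv_dmul.
have oneE : one' = Some d1.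
  clear mI; case: one' on0 m1 E' JE' => [e|] // _ m1 _ _.
  have := m1 (Some e); rewrite mulE /mulF /= => [[ee]].
  have : dmul (dinv e) (dmul e e) = dmul (dinv e) e by rewrite ee.
  by rewrite dmulA dmulV dmul1 => ->.
have Nb' : forall x y, Nb x y = (add' (Some x) (Some y) == Some d1).
  have h : forall x y, N J x y = (add' (Some x) (Some y) == Some d1)%:R.
    apply: U2 => a b; rewrite -!flat2; apply: (mulfI (x := m^-1)).
      by rewrite invr_neq0 ?m_neq0.
    under eq_bigr do under eq_bigr do rewrite mulrA.
    by rewrite -(JE Mab) -js_eq -oneE -JE'.
  by move=> x y; apply: (@bool_natr_inj C); rewrite -N01 h.
have scale : forall t X Y, omul (@dmul C M) (Some t) (add' X Y) =
    add' (omul (@dmul C M) (Some t) X) (omul (@dmul C M) (Some t) Y).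
  move=> t X Y.
  have mCF' : forall Z, omul (@dmul C M) Z (Some t) = omul (@dmul C M) (Some t) Z.
    by case=> //= z; rewrite dmulC.
  have := mD X Y (Some t); rewrite mulE /mulF => e.
  by rewrite -!mCF' e.
split=> //.
apply: boolp.funext => X; apply: boolp.funext => Y.
case: X => [x|]; last by rewrite a0.
case: Y => [y|]; last by rewrite aC a0 /addF addn0.
apply: opt_ext => z.
rewrite addFP -(scale_eq (@dmulA C M) (@dmul1 C M) (@dmulV C M) (dinv z)) dmulV scale /=.
by rewrite -Nb' (dmulC (dinv z) x) (dmulC (dinv z) y).
Qed.

End Final.

Unset Implicit Arguments.

Theorem mainTheorem1 (C : numClosedFieldType) (M : finGroupType)
    (J : M -> M -> C) :
  abelian [set: M] -> (2 <= #|M|)%N -> is_Jacobi J ->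
  exists! S : (Fset M C -> Fset M C -> Fset M C) *
              (Fset M C -> Fset M C -> Fset M C) * Fset M C,
    let '(add, mul, one) := S in
    [/\ field_axioms add mul None one,
        extends_dual_law mul &
        forall a b : M, J a b = jacobi_sum add one a b].
Proof.
move=> Mab M2 HJ.
exists (@addF C M J, @mulF C M, Some (d1 C M)); split.
  split; [apply: fieldF | apply: mulF_ext | move=> a b; apply: JF] => //.
case=> [[add' mul'] one'] [F' E' J'].
by have [-> -> ->] := uniqF Mab HJ F' E' J'.
Qed.
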